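(* Let $\mathbb{S}^{D-1}$ be the unit sphere of $\mathbb{R}^D$ and take $\mathcal{X}=\mathbb{S}^{D-1}$. For any finite nonempty $\mathcal{X}_0\subseteq\mathbb{S}^{D-1}$, $F_\infty(\mathcal{X}_0)=1/\cos\gamma(\pm\mathcal{X}_0)$, where $\pm\mathcal{X}_0=\{\pm\boldsymbol{v}:\boldsymbol{v}\in\mathcal{X}_0\}$.
   Context: For $\boldsymbol{x}\in\mathbb{R}^D$ and finite $\mathcal{X}_0=\{\boldsymbol{v}_1,\dots,\boldsymbol{v}_m\}$, $f_\infty(\boldsymbol{x},\mathcal{X}_0):=\min_{\boldsymbol{c}\in\mathbb{R}^m}\|\boldsymbol{c}\|_1$ subject to $\boldsymbol{x}=\sum_{i}c_i\boldsymbol{v}_i$, with value $+\infty$ if infeasible; $F_\infty(\mathcal{X}_0):=\sup_{\boldsymbol{x}\in\mathbb{S}^{D-1}}f_\infty(\boldsymbol{x},\mathcal{X}_0)$. The covering radius of $\mathcal{V}\subseteq\mathbb{S}^{D-1}$ is $\gamma(\mathcal{V}):=\max_{\boldsymbol{w}\in\mathbb{S}^{D-1}}\min_{\boldsymbol{v}\in\mathcal{V}}\cos^{-1}\langle\boldsymbol{v},\boldsymbol{w}\rangle$. Convention: $1/0=+\infty$. *)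

(* Defs.v *)
From HB Require Import structures.
From mathcomp Require Import all_boot all_order all_algebra.
From mathcomp Require Import all_classical all_reals all_analysis.
Set Implicit Arguments. Unset Strict Implicit. Unset Printing Implicit Defensive.
Import Order.TTheory GRing.Theory Num.Theory.
Local Open Scope classical_set_scope.
Local Open Scope ring_scope.

Section Defs.
Variables (R : realType) (D : nat).

Definition dotv (u w : 'rV[R]_D) : R := (u *m w^T) 0 0.
Definition enorm (u : 'rV[R]_D) : R := Num.sqrt (dotv u u).

Definition sphere : set 'rV[R]_D := [set x | enorm x = 1].

(* f_oo(x, X0) = min ||c||_1 s.t. x = sum_i c_i v_i  (+oo if infeasible),
   X0 = {v_1,...,v_m} given by the family v *)
Definition f_inf (m : nat) (x : 'rV[R]_D) (v : 'I_m -> 'rV[R]_D) : \bar R :=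
  ereal_inf [set (\sum_(i < m) `|c i|)%:E
            | c in [set c : 'I_m -> R | x = \sum_(i < m) c i *: v i]].

Definition F_inf (m : nat) (v : 'I_m -> 'rV[R]_D) : \bar R :=
  ereal_sup [set f_inf x v | x in sphere].

Definition cov_radius (V : set 'rV[R]_D) : R :=
  sup [set inf [set acos (dotv u w) | u in V] | w in sphere].

Definition pm_set (m : nat) (v : 'I_m -> 'rV[R]_D) : set 'rV[R]_D :=
  [set u | exists i, u = v i \/ u = - v i].

End Defs.

Definition inv_ext (R : realType) (r : R) : \bar R :=
  if r == 0 then +oo%E else (r^-1)%:E.

(* Main.v *)
Require Import Defs.
From HB Require Import structures.
From mathcomp Require Import all_boot all_order all_algebra.
From mathcomp Require Import all_classical all_reals all_analysis.
From mathcomp Require Import ring lra.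
Import Order.TTheory GRing.Theory Num.Theory.
Import numFieldTopology.Exports numFieldNormedType.Exports.
Local Open Scope classical_set_scope.
Local Open Scope ring_scope.
Set Implicit Arguments. Unset Strict Implicit. Unset Printing Implicit Defensive.

Section Dot.
Variables (R : realType) (D : nat).
Implicit Types (u w x y : 'rV[R]_D).

Lemma dotvE u w : dotv u w = \sum_j u 0 j * w 0 j.
Proof. by rewrite /dotv !mxE; apply: eq_bigr => j _; rewrite mxE. Qed.

Lemma dotvC u w : dotv u w = dotv w u.
Proof. by rewrite !dotvE; apply: eq_bigr => j _; rewrite mulrC. Qed.

Lemma dotvDl u u' w : dotv (u + u') w = dotv u w + dotv u' w.
Proof. by rewrite !dotvE -big_split; apply: eq_bigr => j _; rewrite !mxE mulrDl. Qed.

Lemma dotvZl a u w : dotv (a *: u) w = a * dotv u w.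
Proof. by rewrite !dotvE mulr_sumr; apply: eq_bigr => j _; rewrite !mxE mulrA. Qed.

Lemma dotvNl u w : dotv (- u) w = - dotv u w.
Proof. by rewrite -scaleN1r dotvZl mulN1r. Qed.

Lemma dotvBl u u' w : dotv (u - u') w = dotv u w - dotv u' w.
Proof. by rewrite dotvDl dotvNl. Qed.

Lemma dotv0l w : dotv 0 w = 0.
Proof. by rewrite dotvE big1 // => j _; rewrite mxE mul0r. Qed.

Lemma dotvDr u w w' : dotv u (w + w') = dotv u w + dotv u w'.
Proof. by rewrite dotvC dotvDl !(dotvC u). Qed.
Lemma dotvZr a u w : dotv u (a *: w) = a * dotv u w.
Proof. by rewrite dotvC dotvZl dotvC. Qed.
Lemma dotvNr u w : dotv u (- w) = - dotv u w.
Proof. by rewrite dotvC dotvNl dotvC. Qed.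
Lemma dotvBr u w w' : dotv u (w - w') = dotv u w - dotv u w'.
Proof. by rewrite dotvDr dotvNr. Qed.

Lemma dotv_suml m (c : 'I_m -> R) (v : 'I_m -> 'rV[R]_D) w :
  dotv (\sum_i c i *: v i) w = \sum_i c i * dotv (v i) w.
Proof.
elim/big_rec2: _ => [|i a b _ H]; first by rewrite dotv0l.
by rewrite dotvDl dotvZl H.
Qed.

Lemma dotvv_ge0 u : 0 <= dotv u u.
Proof. by rewrite dotvE; apply: sumr_ge0 => j _; rewrite -expr2 sqr_ge0. Qed.

Lemma dotvv_eq0 u : dotv u u = 0 -> u = 0.
Proof.
rewrite dotvE => H; apply/matrixP => i j; rewrite ord1 mxE.
have H0 : forall j, true -> 0 <= u 0 j * u 0 j by move=> k _; rewrite -expr2 sqr_ge0.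
have /eqP : u 0 j * u 0 j = 0 by apply: (psumr_eq0P H0 H).
by rewrite mulf_eq0 orbb => /eqP.
Qed.
End Dot.

Section Part2.
Variables (R : realType) (D : nat).
Implicit Types (u w x y : 'rV[R]_D).

Lemma sphereE x : sphere x <-> dotv x x = 1.
Proof.
rewrite /sphere /enorm /=; split => H.
  by have := sqr_sqrtr (dotvv_ge0 x); rewrite H expr1n.
by rewrite H sqrtr1.
Qed.

Lemma unit_dot x w : dotv x x = 1 -> dotv w w = 1 -> -1 <= dotv x w <= 1.
Proof.
move=> hx hw.
have h1 := dotvv_ge0 (x - w); have h2 := dotvv_ge0 (x + w).
rewrite !dotvBl !dotvBr !dotvDl !dotvDr hx hw (dotvC w x) in h1 h2.
apply/andP; split; lra.
Qed.

Lemma acos_anti a b : -1 <= a -> a <= b -> b <= 1 -> acos b <= @acos R a.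
Proof.
move=> a1 ab b1.
have ha : -1 <= a <= 1 by rewrite a1 (le_trans ab b1).
have hb : -1 <= b <= 1 by rewrite b1 (le_trans a1 ab).
rewrite leNgt; apply/negP => H.
have Ia : acos a \in `[0, pi] by rewrite in_itv /= acos_ge0 // acos_lepi.
have Ib : acos b \in `[0, pi] by rewrite in_itv /= acos_ge0 // acos_lepi.
have := ltr_cos Ia Ib; rewrite H !acosK ?in_itv //= => /esym; rewrite ltNge ab.
by [].
Qed.

Definition hh m (v : 'I_m -> 'rV[R]_D) w :=
  \big[Order.max/0]_(i < m) `|dotv (v i) w|.

Variables (m : nat) (v : 'I_m -> 'rV[R]_D).

Lemma hh_ge w i : `|dotv (v i) w| <= hh v w.
Proof. exact: le_bigmax. Qed.

Lemma hh_ge0 w : 0 <= hh v w.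
Proof. by rewrite /hh; elim/big_ind: _ => // a b ha hb; rewrite le_max ha. Qed.

Lemma hh_le w M : 0 <= M -> (forall i, `|dotv (v i) w| <= M) -> hh v w <= M.
Proof. by move=> M0 H; apply: bigmax_le. Qed.

Lemma hh_ex w : (0 < m)%N -> exists i, hh v w = `|dotv (v i) w|.
Proof.
move=> m0; rewrite /hh; have [i _ ->] := @eq_bigmax _ _ _ 0 (Ordinal m0) xpredT (fun i => `|dotv (v i) w|) isT (fun i _ => normr_ge0 _).
by exists i.
Qed.

Hypothesis m0 : (0 < m)%N.
Hypothesis vS : forall i, sphere (v i).

Lemma hh_le1 w : sphere w -> hh v w <= 1.
Proof.
move=> /sphereE hw; have [i ->] := hh_ex w m0.
have /andP[h1 h2] := unit_dot ((sphereE _).1 (vS i)) hw.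
by rewrite ler_norml h1 h2.
Qed.

Lemma inner_inf w : sphere w ->
  inf [set acos (dotv u w) | u in pm_set v] = acos (hh v w).
Proof.
move=> wS; have hw := (sphereE _).1 wS.
have hh1 := hh_le1 wS; have hh0 := hh_ge0 w.
have hhN1 : -1 <= hh v w by lra.
set E := [set _ | _ in _].
have lbE : lbound E (acos (hh v w)).
  move=> _ [u [i [->|->]] <-].
    have /andP[d1 d2] := unit_dot ((sphereE _).1 (vS i)) hw.
    apply: acos_anti => //; apply: le_trans (hh_ge w i); exact: ler_norm.
  have /andP[d1 d2] := unit_dot ((sphereE _).1 (vS i)) hw.
  rewrite dotvNl; apply: acos_anti => //; try lra.
  apply: le_trans (hh_ge w i); rewrite -normrN; exact: ler_norm.
have inE : E (acos (hh v w)).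
  have [i hi] := hh_ex w m0.
  have [d0|d0] := leP 0 (dotv (v i) w).
    by exists (v i); [exists i; left|rewrite hi ger0_norm].
  by exists (- v i); [exists i; right|rewrite hi ltr0_norm // dotvNl].
apply/le_anti/andP; split.
  by apply: ge_inf => //; exists (acos (hh v w)).
by apply: lb_le_inf => //; exists (acos (hh v w)).
Qed.

Lemma cov_radius_eq w0 : sphere w0 -> (forall w, sphere w -> hh v w0 <= hh v w) ->
  cov_radius (pm_set v) = acos (hh v w0).
Proof.
move=> w0S w0min; rewrite /cov_radius.
set E := [set _ | _ in _].
have ubE : ubound E (acos (hh v w0)).
  move=> _ [w wS <-]; rewrite inner_inf //.
  apply: acos_anti; rewrite ?w0min ?hh_le1 //.
  by have := hh_ge0 w0; lra.
have inE : E (acos (hh v w0)) by exists w0 => //; rewrite inner_inf.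
apply/le_anti/andP; split.
  by apply: ge_sup => //; exists (acos (hh v w0)).
by apply: ub_le_sup => //; exists (acos (hh v w0)).
Qed.

End Part2.

Section Cont.
Variable (R : realType).

Lemma cont_sum (T : topologicalType) (I : Type) (r : seq I) (F : I -> T -> R) :
  (forall i, continuous (F i)) -> continuous (fun t => \sum_(i <- r) F i t).
Proof.
move=> H; elim: r => [|a r IH].
  by under eq_fun do rewrite big_nil; apply: cst_continuous.
under eq_fun do rewrite big_cons.
by move=> t; apply: continuousD; [apply: H|apply: IH].
Qed.

Lemma cont_max (T : topologicalType) (I : Type) (r : seq I) (F : I -> T -> R) :
  (forall i, continuous (F i)) ->
  continuous (fun t => \big[Order.max/0]_(i <- r) F i t).
Proof.
move=> H; elim: r => [|a r IH].
  by under eq_fun do rewrite big_nil; apply: cst_continuous.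
under eq_fun do rewrite big_cons.
by move=> t; apply: (@continuous_max _ _ (F a) (fun t => \big[Order.max/0]_(i <- r) F i t)); [apply: H|apply: IH].
Qed.

Variable (D : nat).

Lemma cont_dotvr (u : 'rV[R]_D) : continuous (fun w : 'rV[R]_D => dotv u w).
Proof.
under eq_fun do rewrite dotvE.
apply: cont_sum => j w; apply: continuousM; first exact: cst_continuous.
exact: coord_continuous.
Qed.

Lemma cont_dotvv : continuous (fun w : 'rV[R]_D => dotv w w).
Proof.
under eq_fun do rewrite dotvE.
by apply: cont_sum => j w; apply: continuousM; exact: coord_continuous.
Qed.

Lemma coord_sq_le (x : 'rV[R]_D) j : x 0 j ^+ 2 <= dotv x x.
Proof.
rewrite dotvE (bigD1 j) //= -expr2 lerDl; apply: sumr_ge0 => k _.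
by rewrite -expr2 sqr_ge0.
Qed.

Lemma sphere_compact : compact (@sphere R D).
Proof.
apply: bounded_closed_compact.
  exists 1; split => // M /= M1 x /sphereE hx.
  rewrite [leLHS]/Num.norm /= mx_normrE; apply: bigmax_le => [|ij _]; first lra.
  rewrite (ord1 ij.1); apply: (le_trans _ (ltW M1)).
  have := coord_sq_le x ij.2; rewrite hx => h.
  rewrite ler_norml; apply/andP; split; nra.
have -> : @sphere R D = (fun w => dotv w w) @^-1` [set x | x = 1].
  by apply/seteqP; split => w /= /sphereE.
apply: preimage_closed; last exact: closed_eq.
by move=> w _; apply: cont_dotvv.
Qed.

End Cont.

Section Key.
Variables (R : realType) (D m : nat) (v : 'I_m -> 'rV[R]_D).
Hypothesis m0 : (0 < m)%N.
Hypothesis vS : forall i, sphere (v i).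

Definition LL (c : 'rV[R]_m) : 'rV[R]_D := \sum_i c 0 i *: v i.

Lemma LLD a b : LL (a + b) = LL a + LL b.
Proof. by rewrite /LL -big_split; apply: eq_bigr => i _; rewrite mxE scalerDl. Qed.
Lemma LLZ k a : LL (k *: a) = k *: LL a.
Proof. by rewrite /LL scaler_sumr; apply: eq_bigr => i _; rewrite mxE scalerA. Qed.
Lemma LLN a : LL (- a) = - LL a.
Proof. by rewrite -scaleN1r LLZ scaleN1r. Qed.
Lemma LLB a b : LL (a - b) = LL a - LL b.
Proof. by rewrite LLD LLN. Qed.
Lemma LLdelta j : LL (delta_mx 0 j) = v j.
Proof.
rewrite /LL (bigD1 j) //= big1 ?addr0; first by rewrite mxE !eqxx scale1r.
by move=> i /negbTE ij; rewrite mxE ij andbF scale0r.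
Qed.

Definition N1 (c : 'rV[R]_m) := \sum_i `|c 0 i|.
Definition Cset := [set c : 'rV[R]_m | N1 c <= 1].

Lemma N1_cont : continuous N1.
Proof.
apply: cont_sum => i c; apply: continuous_comp; first exact: coord_continuous.
exact: norm_continuous.
Qed.

Lemma coord_le_N1 (c : 'rV[R]_m) j : `|c 0 j| <= N1 c.
Proof. by rewrite /N1 (bigD1 j) //= lerDl; apply: sumr_ge0 => k _. Qed.

Lemma Cset_compact : compact Cset.
Proof.
apply: bounded_closed_compact.
  exists 1; split => // M /= M1 c hc.
  rewrite [leLHS]/Num.norm /= mx_normrE; apply: bigmax_le => [|ij _]; first lra.
  rewrite (ord1 ij.1); apply: (le_trans _ (ltW M1)).
  exact: le_trans (coord_le_N1 c ij.2) hc.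
apply: (@preimage_closed _ _ N1 [set x : R | x <= 1]); last exact: closed_le.
by move=> c _; apply: N1_cont.
Qed.

Lemma Cset_convex c d t : Cset c -> Cset d -> 0 <= t <= 1 ->
  Cset (c + t *: (d - c)).
Proof.
rewrite /Cset /N1 /= => hc hd /andP[t0 t1].
apply: (@le_trans _ _ (\sum_i ((1 - t) * `|c 0 i| + t * `|d 0 i|))).
  apply: ler_sum => i _; rewrite !mxE.
  have -> : c 0 i + t * (d 0 i - c 0 i) = (1 - t) * c 0 i + t * d 0 i by ring.
  apply: le_trans (ler_normD _ _) _.
  rewrite !normrM (ger0_norm t0) ger0_norm //; lra.
rewrite big_split /= -!mulr_sumr.
have h1 : (1 - t) * (\sum_i `|c 0 i|) <= (1 - t) by rewrite ler_piMr ?subr_ge0.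
have h2 : t * (\sum_i `|d 0 i|) <= t by rewrite ler_piMr.
lra.
Qed.

Lemma Cset_delta s j : `|s| = 1 -> Cset (s *: delta_mx 0 j).
Proof.
move=> hs; rewrite /Cset /N1 /= (bigD1 j) //= big1 ?addr0.
  by rewrite !mxE !eqxx mulr1 hs.
by move=> i /negbTE ij; rewrite !mxE ij andbF mulr0 normr0.
Qed.

End Key.

Lemma cont_sumV (R : realType) (T : topologicalType) (V : normedModType R) (I : Type) (r : seq I) (F : I -> T -> V) :
  (forall i, continuous (F i)) -> continuous (fun t => \sum_(i <- r) F i t).
Proof.
move=> H; elim: r => [|a r IH].
  by under eq_fun do rewrite big_nil; apply: cst_continuous.
under eq_fun do rewrite big_cons.
by move=> t; apply: continuousD; [apply: H|apply: IH].
Qed.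

Lemma dotv_expand (R : realType) (D : nat) (w z : 'rV[R]_D) t :
  dotv (w - t *: z) (w - t *: z) = dotv w w - 2 * t * dotv w z + t * t * dotv z z.
Proof. rewrite !dotvBl !dotvBr !dotvZl !dotvZr (dotvC z w); ring. Qed.

Section Key2.
Variables (R : realType) (D m : nat) (v : 'I_m -> 'rV[R]_D).
Hypothesis m0 : (0 < m)%N.
Hypothesis vS : forall i, sphere (v i).
Variable r : R.
Hypothesis r0 : 0 < r.
Hypothesis hr : forall u, sphere u -> r <= hh v u.

Lemma no_sep (w y : 'rV[R]_D) x : sphere x -> y = r *: x -> 0 < dotv w w ->
  hh v w < dotv w y -> False.
Proof.
move=> /sphereE hx -> W0 hlt.
set k := (Num.sqrt (dotv w w))^-1.
have sq0 : 0 < Num.sqrt (dotv w w) by rewrite sqrtr_gt0.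
have k0 : 0 < k by rewrite invr_gt0.
have uS : sphere (k *: w).
  apply/sphereE; rewrite dotvZl dotvZr mulrA -expr2 exprVn sqr_sqrtr ?mulVf //.
    by rewrite gt_eqF.
  exact: ltW.
have := hr uS.
have hu : hh v (k *: w) <= k * hh v w.
  apply: hh_le; first by rewrite mulr_ge0 ?hh_ge0 // ltW.
  by move=> i; rewrite dotvZr normrM gtr0_norm // ler_pM2l // hh_ge.
have hux := unit_dot ((sphereE _).1 uS) hx.
move: hux; rewrite dotvZl => /andP[_ hux].
have : k * hh v w < k * (r * dotv w x) by rewrite ltr_pM2l // -dotvZr.
have : k * (r * dotv w x) <= r.
  by rewrite mulrCA -[leRHS]mulr1 ler_pM2l.
lra.
Qed.

Lemma key x : sphere x ->
  exists c : 'I_m -> R, x = \sum_i c i *: v i /\ \sum_i `|c i| <= r^-1.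
Proof.
move=> xS.
set y := r *: x.
pose Phi (c : 'rV[R]_m) := dotv (y - LL v c) (y - LL v c).
have Phic : continuous Phi.
  move=> c; apply: (@continuous_comp _ _ _ (fun c => y - LL v c) (fun z => dotv z z)); last first.
    exact: cont_dotvv.
  apply: continuousB; first exact: cst_continuous.
  rewrite /LL.
  have := @cont_sumV R _ 'rV[R]_D _ (index_enum 'I_m) (fun i (c : 'rV[R]_m) => c 0 i *: v i).
  apply => i c'.
  by apply: continuousZr_tmp; apply: coord_continuous.
have [cs csC csmin] : exists2 c, c \in @Cset R m & forall t, t \in @Cset R m -> Phi c <= Phi t.
  apply: EVT_min_rV; last exact: continuous_subspaceT.
    by exists 0; rewrite /Cset /N1 /= big1 // => i _; rewrite mxE normr0.
  exact: Cset_compact.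
have csC' : Cset cs by rewrite inE in csC.
set p := LL v cs; set w := y - p.
have hw0 : w = 0.
  apply: dotvv_eq0; apply/eqP; rewrite eq_le dotvv_ge0 andbT leNgt; apply/negP => W0.
  apply: (no_sep xS erefl W0).
  have step : forall j (s : R), `|s| = 1 -> dotv w (s *: v j - p) <= 0.
    move=> j s hs; rewrite leNgt; apply/negP => a0.
    set z := s *: v j - p in a0 *.
    set a := dotv w z in a0 *.
    have Z0 : 0 <= dotv z z := dotvv_ge0 z.
    set Z := dotv z z in Z0 *.
    set t := Order.min 1 (a / (Z + 1)).
    have Z1 : 0 < Z + 1 by lra.
    have t0 : 0 < t by rewrite lt_min ltr01 divr_gt0.
    have t1 : t <= 1 by rewrite ge_min lexx.
    have tZ : t * (Z + 1) <= a by rewrite -ler_pdivlMr // ge_min lexx orbT.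
    have tI : 0 <= t <= 1 by rewrite t1 ltW.
    have ct := Cset_convex csC' (Cset_delta j hs) tI.
    have := csmin _ (mem_set ct).
    rewrite /Phi LLD LLZ LLB LLZ LLdelta -/p.
    have -> : y - (p + t *: (s *: v j - p)) = w - t *: z by rewrite opprD addrA.
    rewrite dotv_expand -/a -/Z => H.
    have H1 : t * (2 * a - t * Z) <= 0 by nra.
    have H2 : 2 * a - t * Z <= 0 by rewrite -(pmulr_rle0 _ t0).
    nra.
  have hp : forall j, `|dotv (v j) w| <= dotv w p.
    move=> j; have h1 := step j 1 (normr1 _).
    have h2 := step j (-1) ltac:(by rewrite normrN normr1).
    rewrite !dotvBr !dotvZr (dotvC w (v j)) in h1 h2.
    rewrite ler_norml; apply/andP; split; lra.
  have hhp : hh v w <= dotv w p.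
    apply: hh_le; last exact: hp.
    exact: le_trans (normr_ge0 _) (hp (Ordinal m0)).
  have -> : dotv w y = dotv w p + dotv w w by rewrite -dotvDr /w addrCA subrr addr0.
  lra.
have yp : y = LL v cs by apply/eqP; rewrite -subr_eq0; apply/eqP.
exists (fun i => r^-1 * cs 0 i); split.
  have -> : x = r^-1 *: y by rewrite /y scalerA mulVf ?scale1r // gt_eqF.
  by rewrite yp /LL scaler_sumr; apply: eq_bigr => i _; rewrite scalerA.
under eq_bigr do rewrite normrM.
rewrite -mulr_sumr ger0_norm; last by rewrite invr_ge0 ltW.
by rewrite -[leRHS]mulr1 ler_pM2l ?invr_gt0.
Qed.

End Key2.

Lemma lower_rep (R : realType) (D m : nat) (v : 'I_m -> 'rV[R]_D) w (c : 'I_m -> R) :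
  sphere w -> w = \sum_i c i *: v i -> 1 <= (\sum_i `|c i|) * hh v w.
Proof.
move=> /sphereE hw e.
have <- : dotv (\sum_i c i *: v i) w = 1 by rewrite -e.
rewrite dotv_suml mulr_suml; apply: ler_sum => i _.
apply: le_trans (ler_norm _) _; rewrite normrM ler_wpM2l //; exact: hh_ge.
Qed.

Unset Implicit Arguments.
Theorem lemma5 (R : realType) (D m : nat) (v : 'I_m -> 'rV[R]_D) :
  (0 < m)%N -> injective v -> (forall i, (@sphere R D) (v i)) ->
  F_inf v = inv_ext (cos (cov_radius (pm_set v))).
Proof.
move=> m0 _ vS.
have [w0 w0S w0min] : exists2 w0, w0 \in @sphere R D & forall t, t \in @sphere R D -> hh v w0 <= hh v t.
  apply: EVT_min_rV; last apply: continuous_subspaceT.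
  - by exists (v (Ordinal m0)).
  - exact: sphere_compact.
  rewrite /hh; apply: cont_max => i w; apply: continuous_comp; first exact: cont_dotvr.
  exact: norm_continuous.
rewrite inE in w0S.
have hmin : forall w, sphere w -> hh v w0 <= hh v w.
  by move=> w wS; apply: w0min; rewrite inE.
rewrite (cov_radius_eq m0 vS w0S hmin).
set r := hh v w0.
have r0 : 0 <= r := hh_ge0 v w0.
have r1 : r <= 1 := hh_le1 m0 vS w0S.
rewrite acosK; last by rewrite in_itv /=; apply/andP; split; lra.
rewrite /inv_ext; case: eqP => [rz|/eqP rnz].
  apply/eqP; rewrite eq_le leey /=.
  apply: ereal_sup_ubound; exists w0 => //.
  rewrite /f_inf; apply/ereal_inf_pinfty => _ [c hc <-].
  have := lower_rep w0S hc; rewrite -/r rz mulr0; lra.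
have rpos : 0 < r by rewrite lt_neqAle eq_sym rnz.
apply/le_anti/andP; split.
  apply: ge_ereal_sup => _ [x xS <-].
  have [c [hc hcr]] := key m0 rpos hmin xS.
  apply: ge_ereal_inf; exists (\sum_i `|c i|)%:E; first by exists c.
  by rewrite lee_fin.
apply: (@le_trans _ _ (f_inf w0 v)); last by apply: ereal_sup_ubound; exists w0.
apply: le_ereal_inf_tmp => _ [c hc <-].
rewrite lee_fin -[r^-1]mul1r ler_pdivrMr //; exact: lower_rep w0S hc.
Qed.
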